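(* For every integer $n>1$, let $A=1_{n\times n}$ (the all-ones $n\times n$ matrix) and $B=1_{n\times 1}$. Then $(A,B)$ is uncontrollable (indeed its controllability matrix has rank $1$) and its zero-norm distance to controllability equals $r_c(A,B)=n-1$.
   Context: $r_c(A,B)=\min\{\|[\Delta A,\Delta B]\|_0: \Delta A\in\mathbb{R}^{n\times n},\Delta B\in\mathbb{R}^{n\times m},(A+\Delta A,B+\Delta B)\text{ controllable}\}$, where $\|M\|_0$ is the number of nonzero entries of $M$, and controllability means $\operatorname{rank}[B,AB,\dots,A^{n-1}B]=n$. *)

(* Defs.v *)
From HB Require Import structures.
From mathcomp Require Import all_boot all_order all_algebra.
From mathcomp Require Import reals.
Set Implicit Arguments. Unset Strict Implicit. Unset Printing Implicit Defensive.
Import Order.TTheory GRing.Theory Num.Theory.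
Local Open Scope ring_scope.

Definition ctrb (R : comRingType) (n m : nat) (A : 'M[R]_n) (B : 'M[R]_(n, m)) :=
  \mxrow_(k < n) (A ^+ k *m B).

Definition controllable (R : fieldType) (n m : nat) (A : 'M[R]_n) (B : 'M[R]_(n, m)) :=
  \rank (ctrb A B) = n.

Definition norm0 (R : ringType) (p q : nat) (M : 'M[R]_(p, q)) : nat :=
  #|[set ij : 'I_p * 'I_q | M ij.1 ij.2 != 0]|.

Definition is_rc (R : fieldType) (n m : nat) (A : 'M[R]_n) (B : 'M[R]_(n, m)) (k : nat) :=
  (exists (dA : 'M[R]_n) (dB : 'M[R]_(n, m)),
      controllable (A + dA) (B + dB) /\ norm0 (row_mx dA dB) = k) /\
  (forall (dA : 'M[R]_n) (dB : 'M[R]_(n, m)),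
      controllable (A + dA) (B + dB) -> (k <= norm0 (row_mx dA dB))%N).

(* Main.v *)
Require Import Defs.
From HB Require Import structures.
From mathcomp Require Import all_boot all_order all_algebra.
From mathcomp Require Import reals zify.
Import GRing.Theory Num.Theory.
Local Open Scope ring_scope.
Lemma ctrb_block (F : fieldType) n m (M : 'M[F]_n) (b : 'M[F]_(n,m)) (w : 'rV[F]_n) (k : 'I_n) :
  w *m ctrb M b = 0 -> w *m (M ^+ k *m b) = 0.
Proof.
rewrite /ctrb mul_mxrow => H.
by have := mxrowK (fun j : 'I_n => w *m (M ^+ j *m b)) k; rewrite H submxrow0.
Qed.

Lemma ctrb_zero (F : fieldType) n m (M : 'M[F]_n) (b : 'M[F]_(n,m)) (w : 'rV[F]_n) :
  (forall k : 'I_n, w *m (M ^+ k *m b) = 0) -> w *m ctrb M b = 0.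
Proof.
move=> H; rewrite /ctrb mul_mxrow.
rewrite (eq_mxrow (B_ := fun j => 0)); first exact: mxrow0.
exact: H.
Qed.

Lemma not_ctrl (F : fieldType) n m (M : 'M[F]_n) (b : 'M[F]_(n,m)) (w : 'rV[F]_n) :
  w != 0 -> w *m M = 0 -> w *m b = 0 -> ~ controllable M b.
Proof.
move=> w0 wM wb; rewrite /controllable => Hr.
have rf : row_free (ctrb M b) by rewrite /row_free Hr.
have : w *m ctrb M b = 0.
  apply: ctrb_zero => k; case: (nat_of_ord k) => [|k'].
    by rewrite expr0 mul1mx.
  by rewrite exprS -mulmxE !mulmxA wM !mul0mx.
by move/eqP; rewrite (mulmx_free_eq0 _ rf) (negbTE w0).
Qed.

Lemma ctrl_of (F : fieldType) n m (M : 'M[F]_n) (b : 'M[F]_(n,m)) :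
  (forall w : 'rV[F]_n, (forall k : 'I_n, w *m (M ^+ k *m b) = 0) -> w = 0) ->
  controllable M b.
Proof.
move=> H; rewrite /controllable; apply/eqP; rewrite -/(row_free _) -kermx_eq0.
apply/eqP/row_matrixP => i; rewrite row0; apply: H => k.
apply: ctrb_block; by rewrite -row_mul mulmx_ker row0.
Qed.

Lemma feedback (F : fieldType) n (D : 'M[F]_n) (b : 'cV[F]_n) (f : 'rV[F]_n) k :
  forall w : 'rV[F]_n, (forall i, (i <= k)%N -> w *m ((D + b *m f) ^+ i *m b) = 0) ->
  forall i, (i <= k)%N -> w *m (D ^+ i *m b) = 0.
Proof.
elim: k => [|k IH] w H i.
  by rewrite leqn0 => /eqP ->; have := H 0%N (leqnn _).
have wb : w *m b = 0 by have := H 0%N isT; rewrite expr0 mul1mx.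
have wM : w *m (D + b *m f) = w *m D by rewrite mulmxDr mulmxA wb mul0mx addr0.
case: i => [|i] Hi; first by rewrite expr0 mul1mx.
have := IH (w *m D) _ i Hi.
  rewrite exprS -mulmxE !mulmxA; apply.
move=> j Hj; have := H j.+1 Hj.
by rewrite exprS -mulmxE !mulmxA wM.
Qed.
Section S.
Variable (F : fieldType) (n : nat).
Definition Sh : 'M[F]_n := \matrix_(i,j) ((i == (j.+1) :> nat)%:R).

Lemma Sh_pow k (i : 'I_n) : (Sh ^+ k *m (const_mx 1 : 'cV[F]_n)) i 0 = (k <= i)%:R.
Proof.
elim: k i => [|k IH] i.
  by rewrite expr0 mul1mx mxE.
rewrite exprS -mulmxE -mulmxA mxE.
under eq_bigr do rewrite IH mxE.
case: i => [[|i'] Hi] /=.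
  by rewrite big1 // => j _; rewrite mul0r.
rewrite (bigD1 (Ordinal (ltnW Hi))) //= eqxx mul1r big1 ?addr0 //.
move=> j /eqP Hj; case: eqP; last by rewrite mul0r.
by move=> [] Hij; case: Hj; apply: val_inj.
Qed.

Lemma Sh_free (w : 'rV[F]_n) :
  (forall k : 'I_n, w *m (Sh ^+ k *m (const_mx 1 : 'cV[F]_n)) = 0) -> w = 0.
Proof.
move=> H.
pose T k := \sum_(i < n) w 0 i * (k <= i)%:R.
have T0 : forall k, (k < n)%N -> T k = 0.
  move=> k Hk; have := H (Ordinal Hk); move/matrixP/(_ 0 0).
  by rewrite !mxE => <-; apply: eq_bigr => i _; rewrite Sh_pow.
have Tn : T n = 0.
  by rewrite /T big1 // => i _; rewrite leqNgt ltn_ord mulr0.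
have Tk : forall k : 'I_n, T k = w 0 k + T k.+1.
  move=> k; rewrite /T (bigD1 k) //= leqnn mulr1 [in RHS](bigD1 k) //= ltnn mulr0 add0r.
  congr (_ + _); apply: eq_bigr => i Hi.
  have Hki : (k == i :> nat) = false by apply/negbTE; rewrite eq_sym.
  by rewrite leq_eqVlt Hki.
apply/rowP => k; rewrite mxE.
have := Tk k; rewrite T0 //.
have : (k.+1 <= n)%N := ltn_ord k; rewrite leq_eqVlt => /orP [/eqP ->|lt].
  by rewrite Tn addr0 => /esym.
by rewrite T0 // addr0 => /esym.
Qed.
End S.
Lemma norm0_Sh (F : fieldType) n' :
  norm0 (row_mx (Sh F n'.+1) (0 : 'M[F]_(n'.+1,1))) = n'.
Proof.
rewrite /norm0.
pose g (k : 'I_n') := (lift ord0 k : 'I_n'.+1, lshift 1 (widen_ord (leqnSn n') k)).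
transitivity (#|g @: [set: 'I_n']|); last first.
  rewrite card_imset ?cardsT ?card_ord //.
  move=> k1 k2 /(congr1 (fun p => val p.1)) /= H; apply: val_inj; move: H; rewrite /bump /=; lia.
apply: eq_card => -[i j]; rewrite inE /=.
apply/idP/imsetP.
  rewrite -[j]splitK; case: (split j) => [j'|j'] /=; rewrite ?row_mxEl ?row_mxEr ?mxE ?eqxx //.
  case: (@eqP _ (nat_of_ord i) j'.+1) => Hij; last by rewrite eqxx.
  move=> _.
  have Hj : (j' < n')%N by have := ltn_ord i; rewrite Hij.
  exists (Ordinal Hj); first by rewrite inE.
  rewrite /g; apply/eqP; rewrite xpair_eqE; apply/andP; split; apply/eqP; apply: val_inj => //=.
move=> [k _ [-> ->]] /=; rewrite row_mxEl mxE /= /bump /= add1n eqxx.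
by rewrite oner_eq0.
Qed.

Lemma two_zero_rows (F : fieldType) n m (dA : 'M[F]_n) (dB : 'M[F]_(n,m)) :
  (norm0 (row_mx dA dB) < n.-1)%N ->
  exists x y : 'I_n, [/\ x != y, forall j, row_mx dA dB x j = 0 & forall j, row_mx dA dB y j = 0].
Proof.
rewrite /norm0; set Z := [set _ | _] => HZ.
pose Rw := [set ij.1 | ij in Z].
have h1 : (#|Rw| <= #|Z|)%N by apply: leq_imset_card.
have h2 := cardsC Rw; rewrite card_ord in h2.
have : (1 < #|~: Rw|)%N by lia.
move/card_gt1P => [x [y [Hx Hy Hxy]]].
have Hz : forall x, x \in ~: Rw -> forall j, row_mx dA dB x j = 0.
  move=> z Hzz j; apply/eqP; move: Hzz; apply: contraTT => Hne.
  rewrite in_setC negbK.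
  have -> : z = (z, j).1 by [].
  by apply: imset_f; rewrite inE.
by exists x, y; split => //; apply: Hz.
Qed.

Lemma norm0_Sh' (F : fieldType) n : (0 < n)%N ->
  norm0 (row_mx (Sh F n) (0 : 'M[F]_(n,1))) = n.-1.
Proof. by case: n => // n' _; apply: norm0_Sh. Qed.
Theorem mainTheorem6 (R : realType) (n : nat) (hn : (1 < n)%N) :
  let A : 'M[R]_n := const_mx 1 in
  let B : 'M[R]_(n, 1) := const_mx 1 in
  ~ controllable A B /\ \rank (ctrb A B) = 1%N /\ is_rc A B n.-1.
Proof.
move=> A B.
have n0 : (0 < n)%N by apply: ltnW.
pose i0 : 'I_n := Ordinal n0.
have B0 : B != 0.
  apply/eqP => /matrixP /(_ i0 0); rewrite !mxE => /eqP; by rewrite oner_eq0.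
have AB1 : A *m B = B *m (n%:R : R)%:M.
  apply/matrixP => i j; rewrite mul_mx_scalar !mxE.
  under eq_bigr do rewrite !mxE mul1r.
  by rewrite sumr_const card_ord mulr1.
have AB : forall k : 'I_n, A ^+ k *m B = B *m ((n%:R : R) ^+ k)%:M.
  move=> [k _] /=; elim: k => [|k IH]; first by rewrite expr0 mul1mx mulmx1.
  by rewrite exprS -mulmxE -mulmxA IH mulmxA AB1 -mulmxA -scalar_mxM exprS.
have rk1 : \rank (ctrb A B) = 1%N.
  apply/eqP; rewrite eqn_leq; apply/andP; split.
    rewrite /ctrb (eq_mxrow AB) -mul_mxrow.
    exact: leq_trans (mxrankM_maxl _ _) (rank_leq_col _).
  rewrite lt0n mxrank_eq0; apply: contra B0 => /eqP H.
  have := mxrowK (fun j : 'I_n => A ^+ j *m B) i0.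
  by rewrite -/(ctrb A B) H submxrow0 /= expr0 mul1mx => <-.
split.
  rewrite /controllable rk1 => H1; move: hn; rewrite -H1 ltnn //.
split => //.
split.
  exists (Sh R n), 0; split; last by rewrite norm0_Sh'.
  apply: ctrl_of => w Hw; apply: Sh_free => k.
  have HM : Sh R n + B *m (const_mx 1 : 'rV[R]_n) = A + Sh R n.
    rewrite addrC; congr (_ + _); apply/matrixP => i j.
    by rewrite !mxE big_ord1 !mxE mulr1.
  apply: (@feedback R n (Sh R n) B (const_mx 1) n.-1 w) => [i Hi|]; last first.
    by have := ltn_ord k; move: (n0); clear; lia.
  have Hi' : (i < n)%N by move: Hi (n0); clear; lia.
  rewrite HM; have := Hw (Ordinal (n := n) (m := i) Hi').
  by rewrite addr0.
move=> dA dB Hc; rewrite leqNgt; apply/negP => Hlt.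
have [x [y [Hxy Hx Hy]]] := @two_zero_rows R n 1 dA dB Hlt.
pose w : 'rV[R]_n := delta_mx 0 x - delta_mx 0 y.
have wX : forall p (X : 'M[R]_(n, p)), w *m X = row x X - row y X.
  by move=> p X; rewrite mulmxBl -!rowE.
apply: (@not_ctrl R n 1 (A + dA) (B + dB) w) Hc.
- apply/eqP => /matrixP /(_ 0 x); rewrite !mxE eqxx (negbTE Hxy) /= subr0.
  by rewrite eqxx => /eqP; rewrite oner_eq0.
- rewrite wX; apply/eqP; rewrite subr_eq0; apply/eqP/rowP => j; rewrite !mxE.
  by have := Hx (lshift 1 j); have := Hy (lshift 1 j); rewrite !row_mxEl => -> ->.
- rewrite wX; apply/eqP; rewrite subr_eq0; apply/eqP/rowP => j; rewrite !mxE.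
  by have := Hx (rshift n j); have := Hy (rshift n j); rewrite !row_mxEr => -> ->.
Qed.
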